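(* Let $d\ge 2$, $\omega=e^{2\pi i/d}$, $Z=\sum_{k=0}^{d-1}\omega^k|k\rangle\langle k|$, and for $r\in[0,1]$ let $\mathcal{G}_r(\rho)=r\rho+(1-r)Z\rho Z^\dagger$ be the dephasing channel on $\mathbb{C}^d$. For any $r_1,r_2\in[0,1]$, a single-system probe is sufficient for optimally distinguishing $\mathcal{G}_{r_1}$ and $\mathcal{G}_{r_2}$: the maximum of the success probability over single-system probes equals its maximum over all probes, including entangled probes with an arbitrary ancilla.
   Context: Two channels $\mathcal{N}_1,\mathcal{N}_2$ on $\mathbb{C}^d$, chosen with equal priors $1/2$, are discriminated in a single shot. A single-system probe is a state $\rho$ on $\mathbb{C}^d$ with success probability $\frac12+\frac14\|\mathcal{N}_1(\rho)-\mathcal{N}_2(\rho)\|_1$; a general (possibly entangled) probe is a state $\rho_{AB}$ on $\mathbb{C}^d\otimes\mathbb{C}^{d'}$ (any finite $d'$) with the channel acting on $A$, with success probability $\frac12+\frac14\|(\mathcal{N}_1\otimes\mathrm{id})(\rho_{AB})-(\mathcal{N}_2\otimes\mathrm{id})(\rho_{AB})\|_1$; $\|\cdot\|_1$ is the trace norm. *)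

(* Defs.v *)
From HB Require Import structures.
From mathcomp Require Import all_boot all_order all_algebra.
From mathcomp Require Import complex.
From mathcomp Require mxtens.
From mathcomp Require Import reals trigo.

Set Implicit Arguments.
Unset Strict Implicit.
Unset Printing Implicit Defensive.

Import Order.TTheory GRing.Theory Num.Theory.
Local Open Scope ring_scope.
Local Open Scope complex_scope.

Section Defs.
Variable R : realType.
Local Notation C := R[i].

Definition adj m n (A : 'M[C]_(m, n)) : 'M[C]_(n, m) := (map_mx conjc A)^T.

Definition psd n (A : 'M[C]_n) : Prop :=
  adj A = A /\ forall v : 'rV[C]_n, 0 <= (v *m A *m adj v) 0 0.

Definition is_state n (rho : 'M[C]_n) : Prop := psd rho /\ \tr rho = 1.

(* trace norm ||A||_1 = tr sqrt(A^dagger A) = sum of the square roots of the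
   eigenvalues of A^dagger A (given by the spectral decomposition). *)
Definition trnorm n (A : 'M[C]_n) : C :=
  \sum_(i < n) sqrtC (spectral_diag (adj A *m A) 0 i).

Definition omega (d : nat) : C :=
  (cos (2 * pi / d%:R))%:C + 'i * (sin (2 * pi / d%:R))%:C.

Definition Zmx (d : nat) : 'M[C]_d := diag_mx (\row_(k < d) omega d ^+ k).

Definition dephasing (d : nat) (r : R) (rho : 'M[C]_d) : 'M[C]_d :=
  r%:C *: rho + (1 - r)%:C *: (Zmx d *m rho *m adj (Zmx d)).

(* (N (x) id) acting on C^d (x) C^d'; the index p of 'I_(d * d') corresponds
   to the pair (i, a) = mxtens_unindex p, i the system index, a the ancilla
   index.  For a linear map N this is the usual N (x) id:
   ((N (x) id) X)_{(i,a),(j,b)} = (N (X_{ab}))_{ij}, where X_{ab} is the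
   (a,b) block of X. *)
Definition chan_tens_id (d d' : nat) (N : 'M[C]_d -> 'M[C]_d)
    (X : 'M[C]_(d * d')) : 'M[C]_(d * d') :=
  \matrix_(p, q)
    let ia := mxtens.mxtens_unindex p in
    let jb := mxtens.mxtens_unindex q in
    N (\matrix_(k, l) X (mxtens.mxtens_index (k, ia.2))
                        (mxtens.mxtens_index (l, jb.2))) ia.1 jb.1.

Definition psucc_single (d : nat) (N1 N2 : 'M[C]_d -> 'M[C]_d) (rho : 'M[C]_d) : C :=
  1 / 2%:R + 1 / 4%:R * trnorm (N1 rho - N2 rho).

Definition psucc_gen (d d' : nat) (N1 N2 : 'M[C]_d -> 'M[C]_d)
    (rho : 'M[C]_(d * d')) : C :=
  1 / 2%:R + 1 / 4%:R * trnorm (chan_tens_id N1 rho - chan_tens_id N2 rho).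

End Defs.

(* Main.v *)
Require Import Defs.
From HB Require Import structures.
From mathcomp Require Import all_boot all_order all_algebra.
From mathcomp Require Import complex.
From mathcomp Require Import reals.
From mathcomp Require Import trigo.
From mathcomp Require Import spectral sesquilinear.
From mathcomp Require mxtens.
From mathcomp Require Import ring.

Import Order.TTheory GRing.Theory Num.Theory.
Set Implicit Arguments. Unset Strict Implicit. Unset Printing Implicit Defensive.
Local Open Scope ring_scope.
Local Open Scope sesquilinear_scope.

Section P1.
Variable C : numClosedFieldType.

Lemma char_poly_sim n (P A : 'M[C]_n) : P \in unitmx ->
  char_poly (invmx P *m A *m P) = char_poly A.
Proof.
move=> Pu; rewrite /char_poly /char_poly_mx.
have XE : ('X%:M : 'M[{poly C}]_n) =
   map_mx polyC (invmx P) *m 'X%:M *m map_mx polyC P.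
  by rewrite -mulmxA -scalar_mxC mulmxA -map_mxM mulVmx // map_mx1 mul1mx.
rewrite [X in \det X]/= {1}XE !map_mxM. rewrite -mulmxBl -mulmxBr !det_mulmx !det_map_mx mulrC mulrA.
by rewrite -rmorphM -det_mulmx mulmxV // det1 mul1r.
Qed.

Lemma char_poly_diag n (v : 'rV[C]_n) :
  char_poly (diag_mx v) = \prod_(i < n) ('X - (v 0 i)%:P).
Proof.
rewrite char_poly_trig ?diag_mx_trig //.
by apply: eq_bigr => i _; rewrite mxE eqxx mulr1n.
Qed.

Lemma spec_sum n (P P' : 'M[C]_n) (v w : 'rV[C]_n) (f : C -> C) :
  P \in unitmx -> P' \in unitmx ->
  invmx P *m diag_mx v *m P = invmx P' *m diag_mx w *m P' ->
  \sum_(i < n) f (v 0 i) = \sum_(i < n) f (w 0 i).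
Proof.
move=> Pu P'u E.
have := congr1 char_poly E; rewrite !char_poly_sim // !char_poly_diag.
have bmP (u : 'rV[C]_n) :
   \prod_(i < n) ('X - (u 0 i)%:P) = \prod_(x <- [seq u 0 i | i <- enum 'I_n]) ('X - x%:P).
  by rewrite big_map big_enum.
have bmS (u : 'rV[C]_n) :
   \sum_(i < n) f (u 0 i) = \sum_(x <- [seq u 0 i | i <- enum 'I_n]) f x.
  by rewrite big_map big_enum.
rewrite !bmP => /prod_XsubC_eq pe.
by rewrite !bmS; apply: perm_big.
Qed.


Lemma diag_mul n (a b : 'rV[C]_n) :
  diag_mx a *m diag_mx b = diag_mx (\row_i (a 0 i * b 0 i)).
Proof.
apply/matrixP => i j; rewrite mul_diag_mx !mxE.
by case: (i == j) => //=; rewrite ?mulr1n ?mulr0n ?mulr0.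
Qed.

Lemma sq_decomp n (Q : 'M[C]_n) l X : Q \is unitarymx ->
  X = Q^t* *m diag_mx l *m Q -> X *m X = Q^t* *m diag_mx (\row_i (l 0 i ^+ 2)) *m Q.
Proof.
move=> QU ->; rewrite !mulmxA mulmxtVK //.
rewrite -(mulmxA (Q^t*) (diag_mx l) (diag_mx l)) diag_mul; congr (_ *m diag_mx _ *m _).
Qed.

End P1.
Section G.
Variable C : numClosedFieldType.

Definition trnormG n (A : 'M[C]_n) : C :=
  \sum_(i < n) sqrtC (spectral_diag (A^t* *m A) 0 i).
Definition stateG n (t : 'M[C]_n) : Prop :=
  (t^t* = t /\ forall v : 'rV[C]_n, 0 <= (v *m t *m v^t*) 0 0) /\ \tr t = 1.

Lemma tCM m n p (A : 'M[C]_(m,n)) (B : 'M[C]_(n,p)) : (A *m B)^t* = B^t* *m A^t*.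
Proof. by rewrite trmx_mul map_mxM. Qed.

Lemma tCK m n (A : 'M[C]_(m,n)) : A^t*^t* = A.
Proof. by apply/matrixP => i j; rewrite !mxE conjCK. Qed.

Lemma tCB m n (A B : 'M[C]_(m,n)) : (A - B)^t* = A^t* - B^t*.
Proof. by apply/matrixP => i j; rewrite !mxE rmorphB. Qed.

Lemma tCZ m n (a : C) (A : 'M[C]_(m,n)) : (a *: A)^t* = a^* *: A^t*.
Proof. by apply/matrixP => i j; rewrite !mxE rmorphM. Qed.

Lemma herm_of n (X : 'M[C]_n) : X^t* = X -> X \is hermsymmx.
Proof. by move=> h; apply/is_hermitianmxP; rewrite expr0 scale1r h. Qed.

Lemma unitary_tC n (Q : 'M[C]_n) : Q \is unitarymx -> Q^t* *m Q = 1%:M.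
Proof. by move/unitarymxP; apply: mulmx1C. Qed.

Lemma spec_decomp n (X : 'M[C]_n) : X^t* = X ->
  X = (spectralmx X)^t* *m diag_mx (spectral_diag X) *m spectralmx X.
Proof.
move=> h; have /orthomx_spectralP : X \is normalmx by apply: hermitian_normalmx; apply: herm_of.
by rewrite invmx_unitary ?spectral_unitarymx.
Qed.

Lemma spec_real n (X : 'M[C]_n) i : X^t* = X -> spectral_diag X 0 i \is Num.real.
Proof.
move=> h; have /mxOverP : spectral_diag X \is a realmx by apply: hermitian_spectral_diag_real; apply: herm_of.
by apply.
Qed.

Lemma spec_diag_mx n (X : 'M[C]_n) : X^t* = X ->
  spectralmx X *m X *m (spectralmx X)^t* = diag_mx (spectral_diag X).
Proof.
move=> h; rewrite {2}(spec_decomp h) !mulmxA (unitarymxP (spectral_unitarymx _)) mul1mx.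
by rewrite -mulmxA (unitarymxP (spectral_unitarymx _)) mulmx1.
Qed.

Lemma spec_diagE n (X : 'M[C]_n) i : X^t* = X ->
  spectral_diag X 0 i = (spectralmx X *m X *m (spectralmx X)^t*) i i.
Proof. by move=> h; rewrite spec_diag_mx // mxE eqxx mulr1n. Qed.

Lemma trnorm_herm n (X : 'M[C]_n) : X^t* = X ->
  trnormG X = \sum_(i < n) `|spectral_diag X 0 i|.
Proof.
move=> h; set Q := spectralmx X; set l := spectral_diag X.
have QU : Q \is unitarymx by apply: spectral_unitarymx.
have XX : X^t* *m X = invmx Q *m diag_mx (\row_i (l 0 i ^+ 2)) *m Q.
  rewrite h invmx_unitary //; exact: (sq_decomp QU (spec_decomp h)).
have hX : (X^t* *m X)^t* = X^t* *m X by rewrite tCM tCK.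
have E : invmx Q *m diag_mx (\row_i (l 0 i ^+ 2)) *m Q =
    invmx (spectralmx (X^t* *m X)) *m diag_mx (spectral_diag (X^t* *m X)) *m spectralmx (X^t* *m X).
  by rewrite -XX invmx_unitary ?spectral_unitarymx //; exact: spec_decomp hX.
rewrite /trnormG -(spec_sum sqrtC (unitarymx_unit QU) _ E); last first.
  by apply: unitarymx_unit; apply: spectral_unitarymx.
apply: eq_bigr => i _; rewrite mxE -real_normK ?spec_real // sqrCK //.
Qed.

Lemma diag_row m n (A : 'M[C]_(m,n)) (B : 'M[C]_n) i :
  (A *m B *m A^t*) i i = (row i A *m B *m (row i A)^t*) 0 0.
Proof.
rewrite !mxE; apply: eq_bigr => k _; rewrite !mxE; congr (_ * _).
by apply: eq_bigr => j _; rewrite !mxE.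
Qed.

Lemma psd_diag n (t : 'M[C]_n) m (A : 'M[C]_(m,n)) i : stateG t -> 0 <= (A *m t *m A^t*) i i.
Proof. by move=> [[_ h] _]; rewrite diag_row; exact: h. Qed.

Lemma tr_conj n (t A : 'M[C]_n) : A^t* *m A = 1%:M -> \tr (A *m t *m A^t*) = \tr t.
Proof. by move=> h; rewrite mxtrace_mulC mulmxA h mul1mx. Qed.

End G.

Section P2.
Variable R : realType.
Local Notation C := R[i].

Lemma hadjE m n (A : 'M[C]_(m,n)) : adj A = A ^t*.
Proof. by rewrite /adj map_trmx. Qed.

Lemma trnormE n (A : 'M[C]_n) : trnorm A = trnormG A.
Proof. by rewrite /trnorm /trnormG hadjE. Qed.

Lemma stateE n (t : 'M[C]_n) : is_state t -> stateG t.
Proof.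
by move=> [[h1 h2] h3]; split=> //; split; [rewrite -hadjE | move=> v; rewrite -hadjE].
Qed.

End P2.

Section P3.
Variable C : numClosedFieldType.

Lemma adjX n (t U : 'M[C]_n) (D : C) : t^t* = t -> D \is Num.real ->
  (D *: (t - U *m t *m U^t*))^t* = D *: (t - U *m t *m U^t*).
Proof.
move=> ht hD; rewrite tCZ tCB !tCM ht tCK conj_Creal //.
by rewrite mulmxA.
Qed.

Lemma lamE n (t U : 'M[C]_n) (D : C) (ht : t^t* = t) (hD : D \is Num.real) i :
  let X := D *: (t - U *m t *m U^t*) in
  let Q := spectralmx X in
  spectral_diag X 0 i = D * ((Q *m t *m Q^t*) i i - ((Q *m U) *m t *m (Q *m U)^t*) i i).
Proof.
move=> X Q; rewrite spec_diagE; last exact: adjX.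
rewrite -/Q /X -scalemxAr -scalemxAl mulmxBr mulmxBl tCM !mulmxA.
set M1 := Q *m t *m Q^t*; set M2 := Q *m U *m t *m U^t* *m Q^t*.
by rewrite !mxE.
Qed.

Lemma sum_diag n (t A : 'M[C]_n) : A^t* *m A = 1%:M -> stateG t ->
  \sum_i (A *m t *m A^t*) i i = 1.
Proof. by move=> hA [_ <-]; rewrite -(tr_conj t hA) /mxtrace. Qed.

Lemma diag_le1 n (t A : 'M[C]_n) i : A^t* *m A = 1%:M -> stateG t ->
  (A *m t *m A^t*) i i <= 1.
Proof.
move=> hA ht; rewrite -(sum_diag hA ht) (bigD1 i) //= lerDl.
by apply: sumr_ge0 => j _; apply: psd_diag.
Qed.

Lemma unit_prod n (Q U : 'M[C]_n) : Q^t* *m Q = 1%:M -> U^t* *m U = 1%:M ->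
  (Q *m U)^t* *m (Q *m U) = 1%:M.
Proof.
move=> hQ hU; rewrite tCM !mulmxA -(mulmxA _ _ Q) hQ mulmx1 hU //.
Qed.

Lemma gen_bound n (t U : 'M[C]_n) (D : C) : stateG t -> U^t* *m U = 1%:M ->
  D \is Num.real ->
  trnormG (D *: (t - U *m t *m U^t*)) <= `|D| *+ 2.
Proof.
move=> ht hU hD; have hat : t^t* = t by case: ht => [[]].
rewrite trnorm_herm; last exact: adjX.
set X := D *: _; set Q := spectralmx X.
have hQ : Q^t* *m Q = 1%:M by apply: unitary_tC; apply: spectral_unitarymx.
have hQU := unit_prod hQ hU.
under eq_bigr => i _ do rewrite lamE //.
apply: (@le_trans _ _ (\sum_i `|D| * ((Q *m t *m Q^t*) i i + ((Q *m U) *m t *m (Q *m U)^t*) i i))).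
  apply: ler_sum => i _; rewrite normrM ler_wpM2l //.
  apply: (le_trans (ler_normB _ _)).
  by rewrite !ger0_norm //; apply: psd_diag.
by rewrite -mulr_sumr big_split /= !sum_diag // mulr2n mulrDr mulr1.
Qed.


Lemma conj_mul n (A B E : 'M[C]_n) : A^t* *m A = 1%:M ->
  A *m B *m A^t* *m (A *m E *m A^t*) = A *m (B *m E) *m A^t*.
Proof.
move=> hA; rewrite !mulmxA -(mulmxA (A *m B) (A^t*) A) hA mulmx1 //.
Qed.

Lemma lower_bound n (t U : 'M[C]_n) (D : C) : stateG t -> U^t* *m U = 1%:M ->
  D \is Num.real -> \tr (t *m t) = 1 -> \tr (t *m (U *m t *m U^t*)) = 0 ->
  `|D| *+ 2 <= trnormG (D *: (t - U *m t *m U^t*)).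
Proof.
move=> ht hU hD t2 t0; have hat : t^t* = t by case: ht => [[]].
have hX := adjX U hat hD; rewrite trnorm_herm //.
set X := D *: _ in hX *; set Q := spectralmx X; set l := spectral_diag X.
have hQ : Q^t* *m Q = 1%:M by apply: unitary_tC; apply: spectral_unitarymx.
have hQU := unit_prod hQ hU.
have lreal i : l 0 i \is Num.real by apply: spec_real.
have lbound i : `|l 0 i| <= `|D|.
  rewrite /l lamE // normrM -{2}(mulr1 `|D|) ler_wpM2l //.
  set a := (Q *m t *m Q^t*) i i; set b := (Q *m U *m t *m (Q *m U)^t*) i i.
  have a0 : 0 <= a by apply: psd_diag.
  have b0 : 0 <= b by apply: psd_diag.
  have a1 : a <= 1 by apply: diag_le1.
  have b1 : b <= 1 by apply: diag_le1.
  rewrite real_ler_norml ?rpredB ?ger0_real //; apply/andP; split.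
    apply: (@le_trans _ _ (- b)); first by rewrite lerN2.
    by rewrite lerDr.
  by apply: le_trans a1; rewrite gerBl.
have sumsq : \sum_i l 0 i ^+ 2 = D ^+ 2 *+ 2.
  have dm : Q *m X *m Q^t* = diag_mx l by apply: spec_diag_mx.
  have -> : \sum_i l 0 i ^+ 2 = \tr (diag_mx l *m diag_mx l).
    by rewrite diag_mul /mxtrace; apply: eq_bigr => i _; rewrite !mxE eqxx mulr1n expr2.
  rewrite -dm conj_mul // tr_conj //.
  rewrite /X -scalemxAl -scalemxAr !mxtraceZ mulrA -expr2.
  rewrite mulmxBl !mulmxBr !linearB /= mxtrace_mulC t0 conj_mul // tr_conj // t2.
  by rewrite subr0 mxtrace_mulC t0 sub0r opprK mulr2n mulrDr mulr1.
have key : `|D| * (`|D| *+ 2) <= `|D| * \sum_i `|l 0 i|.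
  rewrite mulrnAr -expr2 real_normK // -sumsq mulr_sumr.
  apply: ler_sum => i _; rewrite -real_normK // expr2 ler_wpM2r //.
have [->|D0] := eqVneq D 0.
  by rewrite normr0 mul0rn; apply: sumr_ge0 => i _.
have Dp : 0 < `|D| by rewrite normr_gt0.
by rewrite -(ler_pM2l Dp).
Qed.

End P3.

Section P5.
Variable C : numClosedFieldType.

Lemma tC_diag n (w : 'rV[C]_n) : (diag_mx w)^t* = diag_mx (\row_i (w 0 i)^*).
Proof.
apply/matrixP => i j; rewrite !mxE.
by case: (eqVneq i j) => [->|_]; rewrite ?eqxx ?mulr1n ?mulr0n ?rmorph0.
Qed.

Lemma conj_diag_entry n (w : 'rV[C]_n) (M : 'M[C]_n) i j :
  (diag_mx w *m M *m (diag_mx w)^t*) i j = w 0 i * M i j * (w 0 j)^*.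
Proof. by rewrite tC_diag mul_mx_diag mxE mul_diag_mx !mxE. Qed.

Lemma diag_unit n (w : 'rV[C]_n) : (forall i, (w 0 i)^* * w 0 i = 1) ->
  (diag_mx w)^t* *m diag_mx w = 1%:M.
Proof.
move=> h; rewrite tC_diag diag_mul; apply/matrixP => i j; rewrite !mxE h.
by case: (i == j).
Qed.

Lemma diff_scale n (a b : C) (t S : 'M[C]_n) :
  (a *: t + (1 - a) *: S) - (b *: t + (1 - b) *: S) = (a - b) *: (t - S).
Proof. by apply/matrixP => i j; rewrite !mxE; ring. Qed.

Definition rho0 d : 'M[C]_d := (d%:R)^-1 *: ((const_mx 1 : 'rV[C]_d)^t* *m const_mx 1).

Lemma rho0E d i j : rho0 d i j = (d%:R)^-1.
Proof. by rewrite !mxE big_ord1 !mxE conjC1 !mulr1. Qed.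

Lemma rho0_tr d : (0 < d)%N -> \tr (rho0 d) = 1.
Proof.
move=> d0; have dn : (d%:R : C) != 0 by rewrite pnatr_eq0 -lt0n.
rewrite /mxtrace (eq_bigr (fun _ => (d%:R)^-1)) => [|i _]; last by rewrite rho0E.
by rewrite sumr_const card_ord -[_ *+ d]mulr_natr mulVf.
Qed.

Lemma rho0_herm d : (rho0 d)^t* = rho0 d.
Proof. by apply/matrixP => i j; rewrite mxE mxE rho0E rho0E conj_Creal // rpredV realn. Qed.

Lemma rho0_psd d (v : 'rV[C]_d) : 0 <= (v *m rho0 d *m v^t*) 0 0.
Proof.
rewrite /rho0 -scalemxAr -scalemxAl mxE mulr_ge0 ?invr_ge0 ?ler0n //.
set e := const_mx 1 : 'rV[C]_d.
have -> : v *m (e^t* *m e) *m v^t* = (v *m e^t*) *m (v *m e^t*)^t*.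
  by rewrite tCM tCK !mulmxA.
set B := v *m e^t*.
by rewrite mxE big_ord1 !mxE -normCK exprn_ge0.
Qed.

Lemma rho0_state d : (0 < d)%N -> stateG (rho0 d).
Proof. by move=> d0; split; [split; [exact: rho0_herm | exact: rho0_psd] | exact: rho0_tr]. Qed.


Lemma rho0_sq d : (0 < d)%N -> rho0 d *m rho0 d = rho0 d.
Proof.
move=> d0; have dn : (d%:R : C) != 0 by rewrite pnatr_eq0 -lt0n.
apply/matrixP => i j; rewrite mxE (eq_bigr (fun _ => (d%:R)^-1 * (d%:R)^-1)) => [|k _]; last by rewrite !rho0E.
by rewrite sumr_const card_ord rho0E -[_ *+ d]mulr_natr -mulrA mulVf // mulr1.
Qed.

Lemma rho0_orth d (w : 'rV[C]_d) : \sum_i w 0 i = 0 ->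
  \tr (rho0 d *m (diag_mx w *m rho0 d *m (diag_mx w)^t*)) = 0.
Proof.
move=> hw; rewrite /mxtrace big1 // => k _; rewrite mxE.
rewrite (eq_bigr (fun l => w 0 l * ((d%:R)^-1 * (d%:R)^-1 * (w 0 k)^*))) => [|l _].
  by rewrite -mulr_suml hw mul0r.
rewrite conj_diag_entry !rho0E; ring.
Qed.


Lemma entry_dep n (a b : C) (w : 'rV[C]_n) (M : 'M[C]_n) i j :
  (a *: M + b *: (diag_mx w *m M *m (diag_mx w)^t*)) i j =
  a * M i j + b * (w 0 i * M i j * (w 0 j)^*).
Proof. by rewrite -conj_diag_entry !mxE. Qed.

End P5.

Local Open Scope complex_scope.

Section P4.
Variable R : realType.
Local Notation C := R[i].

Definition cis (t : R) : C := cos t +i* sin t.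

Lemma cisD a b : cis a * cis b = cis (a + b).
Proof. rewrite /cis; simpc; rewrite cosD sinD; congr (_ +i* _); exact: addrC. Qed.

Lemma cis0 : cis 0 = 1.
Proof. by rewrite /cis cos0 sin0. Qed.

Lemma cisX t k : cis t ^+ k = cis (t *+ k).
Proof.
elim: k => [|k IH]; first by rewrite expr0 mulr0n cis0.
by rewrite exprS IH cisD mulrS.
Qed.

Lemma cisJ t : (cis t)^* * cis t = 1.
Proof.
rewrite /cis; simpc; rewrite -!expr2 cos2Dsin2.
by congr (_ +i* _); rewrite mulrC subrr.
Qed.

Lemma omegaE d : omega R d = cis (2 * pi / d%:R).
Proof. by rewrite /omega /cis; simpc. Qed.

Lemma omega_d d : (0 < d)%N -> omega R d ^+ d = 1.
Proof.
move=> d0; rewrite omegaE cisX -(mulr_natr (2 * pi / d%:R)) mulfVK ?pnatr_eq0 -?lt0n //.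
by rewrite /cis mulr_natl cos2pi sin2pi.
Qed.

Lemma omega_neq1 d : (2 <= d)%N -> omega R d != 1.
Proof.
move=> d2; rewrite omegaE /cis; apply/negP => /eqP [] /eqP Ec _.
have dp : (0 : R) < d%:R by rewrite ltr0n (leq_trans _ d2).
have h0 : (0 : R) < 2 * pi / d%:R by rewrite divr_gt0 // mulr_gt0 // pi_gt0.
have h1 : 2 * pi / d%:R <= (pi : R).
  by rewrite ler_pdivrMr // [X in _ <= X]mulrC ler_pM2r ?pi_gt0 // ler_nat.
move/eqP: Ec => Ec; have := @cos_inj R (2 * pi / d%:R) 0.
rewrite !in_itv /= (ltW h0) h1 lexx pi_ge0 Ec cos0 => /(_ isT isT erefl) E.
by move: h0; rewrite E ltxx.
Qed.

Lemma sum_omega d : (2 <= d)%N -> \sum_(k < d) omega R d ^+ k = 0.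
Proof.
move=> d2; have := subrX1 (omega R d) d; rewrite omega_d ?subrr; last by case: d d2.
move/esym/eqP; rewrite mulf_eq0 subr_eq0 (negPf (omega_neq1 d2)) /=.
by move/eqP.
Qed.

End P4.

Section P6.
Variable R : realType.
Local Notation C := R[i].

Lemma stateE' n (t : 'M[C]_n) : stateG t -> is_state t.
Proof.
by move=> [[h1 h2] h3]; split=> //; split; [rewrite hadjE | move=> v; rewrite hadjE].
Qed.

Lemma omega_unit d k : ((omega R d ^+ k)^* * omega R d ^+ k = 1).
Proof. by rewrite omegaE cisX cisJ. Qed.

Lemma Zmx_unit d : (Zmx R d)^t* *m Zmx R d = 1%:M.
Proof. by apply: diag_unit => i; rewrite mxE omega_unit. Qed.

Definition Ut d d' : 'M[C]_(d * d') :=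
  diag_mx (\row_p omega R d ^+ (mxtens.mxtens_unindex p).1).

Lemma Ut_unit d d' : (Ut d d')^t* *m Ut d d' = 1%:M.
Proof. by apply: diag_unit => i; rewrite mxE omega_unit. Qed.

Lemma dephE d r (t : 'M[C]_d) :
  dephasing r t = r%:C *: t + (1 - r%:C) *: (Zmx R d *m t *m (Zmx R d)^t*).
Proof. by rewrite /dephasing hadjE rmorphB rmorph1. Qed.

Lemma chanE d d' r (t : 'M[C]_(d * d')) :
  chan_tens_id (@dephasing R d r) t =
  r%:C *: t + (1 - r%:C) *: (Ut d d' *m t *m (Ut d d')^t*).
Proof.
apply/matrixP => p q; rewrite mxE /= dephE /Zmx /Ut.
rewrite !entry_dep !mxE.
have ip x : mxtens.mxtens_index (mxtens.mxtens_unindex x) = x :> 'I_(d * d').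
  exact: mxtens.mxtens_unindexK.
by rewrite !ip.
Qed.

End P6.

Local Close Scope sesquilinear_scope.

Lemma realC (R : realType) (x : R) : (x%:C : R[i]) \is Num.real.
Proof.
by case: (lerP 0 x) => h; [apply: ger0_real; rewrite ler0c | apply: ler0_real; have := ltW h; rewrite -(lecR x 0)].
Qed.

Theorem theorem3 (R : realType) (d : nat) (r1 r2 : R) :
  (2 <= d)%N -> 0 <= r1 <= 1 -> 0 <= r2 <= 1 ->
  exists rho : 'M[R[i]]_d,
    is_state rho /\
    (forall sigma : 'M[R[i]]_d, is_state sigma ->
       psucc_single (@dephasing R d r1) (@dephasing R d r2) sigma
       <= psucc_single (@dephasing R d r1) (@dephasing R d r2) rho) /\
    (forall (d' : nat) (tau : 'M[R[i]]_(d * d')), is_state tau ->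
       psucc_gen (@dephasing R d r1) (@dephasing R d r2) tau
       <= psucc_single (@dephasing R d r1) (@dephasing R d r2) rho).
Proof.
move=> d2 _ _; have d0 : (0 < d)%N by apply: leq_trans d2.
set D : R[i] := r1%:C - r2%:C.
have hD : D \is Num.real by rewrite rpredB ?realC.
have hs := rho0_state (R[i]) d0.
have LB : `|D| *+ 2 <= trnorm (dephasing r1 (rho0 _ d) - dephasing r2 (rho0 _ d)).
  rewrite !dephE diff_scale trnormE; apply: lower_bound => //.
  - exact: Zmx_unit.
  - by rewrite rho0_sq // rho0_tr.
  - apply: rho0_orth; rewrite (eq_bigr (fun i : 'I_d => omega R d ^+ i)) => [|i _].
      exact: sum_omega.
    by rewrite mxE.
have q0 : (0 : R[i]) <= 1 / 4%:R by rewrite divr_ge0 ?ler01 ?ler0n.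
exists (rho0 _ d); split; first exact: stateE'.
split.
  move=> s hs'; rewrite /psucc_single lerD2l; apply: (ler_wpM2l q0).
  apply: (le_trans _ LB); rewrite !dephE diff_scale trnormE.
  exact: (gen_bound (stateE hs') (Zmx_unit _ _) hD).
move=> d' t ht; rewrite /psucc_gen /psucc_single lerD2l; apply: (ler_wpM2l q0).
apply: (le_trans _ LB); rewrite !chanE diff_scale trnormE.
exact: (gen_bound (stateE ht) (Ut_unit _ _ _) hD).
Qed.
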